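(* Let $G$ be a finite simple graph on $[d]$. Then: (a) for $I\in\{\langle [I_G]_2\rangle, J_G, L_G\}$, $I$ is a prime ideal if and only if $I=I_G$; (b) $I_G=\langle [I_G]_2\rangle$ if and only if $I_G$ is generated by quadratic binomials; (c) $\langle [I_G]_2\rangle=J_G$ if and only if the complement graph $\overline{G}$ has no $3$-cycle; (d) $J_G=L_G$ if and only if $G$ is a complete multipartite graph on a vertex partition $V_1\sqcup\cdots\sqcup V_t$ with $|V_j|\le 3$ for every $j$.
   Context: A stable set of $G$ is a subset of $[d]$ with no edge of $G$ (including $\emptyset$ and singletons); $S(G)$ is the set of stable sets; $R[G]=\mathbb{K}[x_S : S\in S(G)]$ over a field $\mathbb{K}$, all variables of degree $1$. $I_G$ is the kernel of $\pi:R[G]\to\mathbb{K}[t_1,\dots,t_d,s]$, $\pi(x_S)=s\prod_{j\in S}t_j$ (a binomial $\prod x_{S_i}-\prod x_{T_i}$ of equal degree lies in $I_G$ iff the multiset unions of the $S_i$ and of the $T_i$ coincide). $\langle [I_G]_2\rangle$ is the ideal generated by the degree-$2$ homogeneous elements of $I_G$. $J_G$ is the ideal generated by all $x_{S_1}x_{S_2}-x_{S_3}x_{S_4}$ with $S_i\in S(G)$, $S_1\cap S_2=S_3\cap S_4=\emptyset$, $S_1\cup S_2=S_3\cup S_4$. $L_G=\langle x_{S\setminus\{i\}}x_{\{i\}}-x_Sx_\emptyset : i\in S\in S(G),\ |S|\ge2\rangle$. By convention, ''$I_G$ is generated by quadratic binomials'' includes the case $I_G=\{0\}$. A complete multipartite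 graph on $V_1\sqcup\dots\sqcup V_t$ has an edge between two vertices iff they lie in different parts. *)

(* Defs.v *)
From HB Require Import structures.
From mathcomp Require Import all_boot all_algebra.
From mathcomp Require Import mpoly.
Set Implicit Arguments. Unset Strict Implicit. Unset Printing Implicit Defensive.
Import GRing.Theory.
Local Open Scope ring_scope.

Section Defs.
Variables (K : fieldType) (d : nat) (G : rel 'I_d).

Definition simple_graph := ssrbool.symmetric G /\ irreflexive G.

Definition stable (S : {set 'I_d}) : bool :=
  [forall i, forall j, (i \in S) && (j \in S) ==> ~~ G i j].

Definition stype := {S : {set 'I_d} | stable S}.

Definition nvar := #|{: stype}|.

(* R[G] = K[x_S : S in S(G)], variables indexed via enum_rank *)
Definition RG := {mpoly K[nvar]}.

Definition xvar (S : stype) : RG := 'X_(enum_rank S).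

(* x_A for an arbitrary subset A; equal to the variable x_A when A is stable
   (only ever used for stable A) *)
Definition xset (A : {set 'I_d}) : RG :=
  if @insub _ stable stype A is Some T then xvar T else 0.

(* target ring K[t_1..t_d, s] : t_j = 'X_(widen j), s = 'X_(ord_max) *)
Definition Tring := {mpoly K[d.+1]}.
Definition tvar (j : 'I_d) : Tring := 'X_(widen_ord (leqnSn d) j).
Definition svar : Tring := 'X_(@ord_max d).

Definition pi_img (k : 'I_nvar) : Tring :=
  svar * \prod_(j in val (enum_val k)) tvar j.

Definition pi (p : RG) : Tring := p \mPo [tuple pi_img k | k < nvar].

Definition I_G : RG -> Prop := fun p => pi p = 0.

Definition ideal_gen (A : RG -> Prop) : RG -> Prop := fun p =>
  exists s : seq (RG * RG),
    (forall c, c \in s -> A c.2) /\ p = \sum_(c <- s) c.1 * c.2.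

Definition ideal_eq (I J : RG -> Prop) := forall p, I p <-> J p.

Definition prime_ideal (I : RG -> Prop) :=
  ~ I 1 /\ forall a b, I (a * b) -> I a \/ I b.

Definition I_G2 : RG -> Prop :=
  ideal_gen (fun p => I_G p /\ p \is 2.-homog).

Definition J_gens : RG -> Prop := fun p =>
  exists S1 S2 S3 S4 : {set 'I_d},
    [/\ stable S1, stable S2, stable S3 & stable S4] /\
    [/\ S1 :&: S2 = set0, S3 :&: S4 = set0, S1 :|: S2 = S3 :|: S4 &
        p = xset S1 * xset S2 - xset S3 * xset S4].
Definition J_G := ideal_gen J_gens.

Definition L_gens : RG -> Prop := fun p =>
  exists (S : {set 'I_d}) (i : 'I_d),
    [/\ stable S, i \in S, (2 <= #|S|)%N &
        p = xset (S :\ i) * xset [set i] - xset S * xset set0].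
Definition L_G := ideal_gen L_gens.

Definition quad_binomial (p : RG) :=
  exists a b c e : stype, p = xvar a * xvar b - xvar c * xvar e.

(* I_G is generated by quadratic binomials (includes I_G = 0, via B empty) *)
Definition IG_gen_by_quad_binomials :=
  exists B : RG -> Prop,
    (forall p, B p -> quad_binomial p) /\ ideal_eq I_G (ideal_gen B).

Definition compl_has_triangle :=
  exists a b c : 'I_d,
    [/\ a != b, b != c & a != c] /\ [/\ ~~ G a b, ~~ G b c & ~~ G a c].

Definition complete_multipartite_le3 :=
  exists P : {set {set 'I_d}},
    [/\ partition P [set: 'I_d],
        (forall i j, G i j = (pblock P i != pblock P j)) &
        (forall V, V \in P -> (#|V| <= 3)%N)].

End Defs.

Arguments I_G K {d} G _.
Arguments I_G2 K {d} G _.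
Arguments J_G K {d} G _.
Arguments L_G K {d} G _.
Arguments IG_gen_by_quad_binomials K {d} G.
Arguments compl_has_triangle {d} G.
Arguments complete_multipartite_le3 {d} G.
Arguments prime_ideal {K d G} I.
Arguments ideal_eq {K d G} I J.
Arguments simple_graph {d} G.

(* Main.v *)
Require Import Defs.
From HB Require Import structures.
From mathcomp Require Import all_boot all_algebra.
From mathcomp Require Import mpoly.
From mathcomp Require Import ring.
Set Implicit Arguments. Unset Strict Implicit. Unset Printing Implicit Defensive.
Import GRing.Theory.
Local Open Scope ring_scope.

Section MonoComp.
Variables (K : fieldType) (n k : nat) (im : 'I_n -> 'X_{1..k}).

Definition mkey (m : 'X_{1..n}) : 'X_{1..k} := (\sum_(i < n) (im i *+ m i))%MM.
Definition mtup : n.-tuple {mpoly K[k]} := [tuple 'X_[im i] | i < n].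

Lemma mkeyE m c : mkey m c = (\sum_(i < n) im i c * m i)%N.
Proof. by rewrite /mkey mnm_sumE; apply: eq_bigr => i _; rewrite mulmnE. Qed.

Lemma mcompX m : 'X_[m] \mPo mtup = 'X_[mkey m].
Proof.
rewrite comp_mpolyX /mkey (big_morph (fun m : 'X_{1..k} => 'X_[m] : {mpoly K[k]}) (@mpolyXD _ _) (@mpolyX0 _ _)).
apply: eq_bigr => i _.
by rewrite tnth_mktuple mpolyXn.
Qed.

Lemma mcomp_coef (p : {mpoly K[n]}) u :
  (p \mPo mtup)@_u = \sum_(m <- msupp p | mkey m == u) p@_m.
Proof.
rewrite comp_mpolyEX raddf_sum /= [RHS]big_mkcond /=. apply: eq_bigr => m _.
rewrite mcoeffZ mcompX mcoeffX; case: eqP => _; by rewrite ?mulr1 ?mulr0.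
Qed.

Lemma mcomp_inj (p : {mpoly K[n]}) :
  injective mkey -> p \mPo mtup = 0 -> p = 0.
Proof.
move=> inj h; apply/mpolyP => a; rewrite mcoeff0.
have := congr1 (mcoeff (mkey a)) h; rewrite mcomp_coef mcoeff0.
under eq_bigl do rewrite (inj_eq inj).
case: (boolP (a \in msupp p)) => ha.
  rewrite -big_filter; have -> : [seq m <- msupp p | m == a] = [:: a].
    rewrite -(filter_pred1_uniq (msupp_uniq p) ha); apply: eq_filter => x.
    by rewrite eq_sym.
  by rewrite big_seq1.
by move=> _; move: ha; rewrite mcoeff_msupp negbK => /eqP.
Qed.

End MonoComp.

Section CompComp.
Variables (K : fieldType) (n k l : nat).
Lemma comp_mpoly_comp (p : {mpoly K[n]}) (lq : n.-tuple {mpoly K[k]})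
   (lr : k.-tuple {mpoly K[l]}) :
  (p \mPo lq) \mPo lr = p \mPo [tuple (tnth lq i \mPo lr) | i < n].
Proof.
rewrite (comp_mpolyEX p lq) (comp_mpolyEX p) raddf_sum; apply: eq_bigr => m _.
transitivity ((p@_m *: ('X_[m] \mPo lq)) \mPo lr); first by [].
rewrite comp_mpolyZ !comp_mpolyX rmorph_prod; congr (_ *: _).
by apply: eq_bigr => i _; rewrite rmorphXn tnth_mktuple.
Qed.

Lemma comp_mpolyXt (i : 'I_n) (lq : n.-tuple {mpoly K[k]}) :
  'X_i \mPo lq = tnth lq i.
Proof. by rewrite comp_mpolyXU (tnth_nth 0). Qed.
End CompComp.
Section Ideals.
Variables (K : fieldType) (d : nat) (G : rel 'I_d).
Local Notation R := {mpoly K[nvar G]}.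

Definition is_ideal (I : R -> Prop) :=
  [/\ I 0, (forall p q, I p -> I q -> I (p + q)) & (forall p q, I q -> I (p * q))].

Lemma ig_ideal (A : R -> Prop) : is_ideal (ideal_gen A).
Proof.
split.
- by exists [::]; rewrite big_nil.
- move=> p q [s1 [h1 ->]] [s2 [h2 ->]]; exists (s1 ++ s2); split.
    by move=> c; rewrite mem_cat => /orP [] ?; [apply: h1|apply: h2].
  by rewrite big_cat.
- move=> p q [s [h ->]]; exists [seq (p * c.1, c.2) | c <- s]; split.
    move=> c /mapP [c' hc' ->] /=. exact: h.
  by rewrite big_map mulr_sumr; apply: eq_bigr => c _; rewrite mulrA.
Qed.

Lemma ig_gen (A : R -> Prop) p : A p -> ideal_gen A p.
Proof. by move=> h; exists [:: (1, p)]; split; [move=> c; rewrite inE => /eqP -> | rewrite big_seq1 mul1r]. Qed.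

Lemma ig_min (A I : R -> Prop) : is_ideal I -> (forall p, A p -> I p) ->
  forall p, ideal_gen A p -> I p.
Proof.
move=> [I0 ID IM] hA p [s [hs ->]]; elim: s hs => [|c s ih] hs; first by rewrite big_nil.
rewrite big_cons; apply: ID; first by apply: IM; apply: hA; apply: hs; rewrite inE eqxx.
by apply: ih => c' h; apply: hs; rewrite inE h orbT.
Qed.

Section IdealProps.
Variables (I : R -> Prop) (hI : is_ideal I).
Lemma id0 : I 0. Proof. by case: hI. Qed.
Lemma idD p q : I p -> I q -> I (p + q). Proof. by case: hI => _ h _; apply: h. Qed.
Lemma idM p q : I q -> I (p * q). Proof. by case: hI => _ _ h; apply: h. Qed.
Lemma idMr p q : I p -> I (p * q). Proof. by rewrite mulrC; apply: idM. Qed.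
Lemma idN p : I p -> I (- p). Proof. by move=> h; rewrite -mulN1r; apply: idM. Qed.
Lemma idB p q : I p -> I q -> I (p - q). Proof. by move=> hp hq; apply: idD => //; apply: idN. Qed.
Lemma idZ c p : I p -> I (c *: p). Proof. by move=> h; rewrite -mul_mpolyC; apply: idM. Qed.
Lemma id_eq p q : p = q -> I p -> I q. Proof. by move=> ->. Qed.
Lemma id_sum (T : Type) (r : seq T) (P : pred T) (F : T -> R) :
  (forall i, P i -> I (F i)) -> I (\sum_(i <- r | P i) F i).
Proof.
move=> h; elim: r => [|x r ih]; first by rewrite big_nil; apply: id0.
by rewrite big_cons; case: ifP => // hx; apply: idD => //; apply: h.
Qed.
Lemma id_sum_seq (T : eqType) (r : seq T) (F : T -> R) :
  (forall i, i \in r -> I (F i)) -> I (\sum_(i <- r) F i).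
Proof.
move=> h; rewrite big_seq_cond; apply: id_sum => i /andP [hi _]; exact: h.
Qed.
Lemma idcM a b c e : I (a - b) -> I (c - e) -> I (a * c - b * e).
Proof.
move=> h1 h2; have -> : a * c - b * e = c * (a - b) + b * (c - e).
  by rewrite !mulrBr [c * a]mulrC [c * b]mulrC addrA subrK.
by apply: idD; apply: idM.
Qed.
Lemma idcX a b m : I (a - b) -> I (a ^+ m - b ^+ m).
Proof.
move=> h; elim: m => [|m ih]; first by rewrite !expr0 subrr; apply: id0.
by rewrite !exprS; apply: idcM.
Qed.
Lemma idc_prod (T : Type) (r : seq T) (a b : T -> R) (e : T -> nat) :
  (forall i, I (a i - b i)) ->
  I (\prod_(i <- r) a i ^+ e i - \prod_(i <- r) b i ^+ e i).
Proof.
move=> h; elim: r => [|x r ih]; first by rewrite !big_nil subrr; apply: id0.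
by rewrite !big_cons; apply: idcM => //; apply: idcX.
Qed.
End IdealProps.

Lemma ev_ideal (v : 'I_(nvar G) -> K) : is_ideal (fun p : R => p.@[v] = 0).
Proof.
split => [|p q hp hq|p q hq]; first by rewrite meval0.
  by rewrite mevalD hp hq addr0.
by rewrite mevalM hq mulr0.
Qed.

End Ideals.

Section PiComp.
Variables (K : fieldType) (d : nat) (G : rel 'I_d).
Local Notation R := {mpoly K[nvar G]}.
Local Notation T := {mpoly K[d.+1]}.
Local Notation piG := (@Defs.pi K d G).

Definition S_ (k : 'I_(nvar G)) : {set 'I_d} := val (enum_val k).
Definition ocd (c : 'I_d.+1) : option 'I_d := insub (val c).
Definition img (k : 'I_(nvar G)) : 'X_{1..d.+1} :=
  [multinom (if ocd c is Some j then nat_of_bool (j \in S_ k) else 1%N) | c < d.+1].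
Definition key := mkey img.
Definition wd (j : 'I_d) : 'I_d.+1 := widen_ord (leqnSn d) j.

Lemma ocd_widen j : ocd (wd j) = Some j.
Proof. exact: valK. Qed.
Lemma ocd_max : ocd ord_max = None.
Proof. by rewrite /ocd insubF //= ltnn. Qed.
Lemma ord_cases (c : 'I_d.+1) : (exists j, c = wd j) \/ c = ord_max.
Proof.
case: (ltnP c d) => h; first by left; exists (Ordinal h); apply: val_inj.
by right; apply: val_inj => /=; apply/eqP; rewrite eqn_leq h -ltnS ltn_ord.
Qed.
Lemma img_widen k j : img k (wd j) = (j \in S_ k).
Proof. by rewrite mnmE ocd_widen. Qed.
Lemma img_max k : img k ord_max = 1%N.
Proof. by rewrite mnmE ocd_max. Qed.

Lemma prod_in (F : 'I_d -> T) (S : {set 'I_d}) :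
  \prod_(j in S) F j = \prod_(j < d) F j ^+ (j \in S).
Proof. by rewrite big_mkcond; apply: eq_bigr => j _; case: (j \in S); rewrite ?expr1 ?expr0. Qed.

Lemma pi_imgX k : pi_img K k = 'X_[img k].
Proof.
rewrite mpolyXE_id big_ord_recr /= img_max expr1 /pi_img mulrC prod_in; congr (_ * _).
by apply: eq_bigr => j _; rewrite -/(wd j) img_widen.
Qed.

Lemma piE (p : R) : piG p = p \mPo mtup K img.
Proof.
rewrite /Defs.pi; congr (comp_mpoly _ p); apply: eq_from_tnth => i.
by rewrite !tnth_mktuple pi_imgX.
Qed.

Lemma piX m : piG ('X_[m] : R) = 'X_[key m].
Proof. by rewrite piE mcompX. Qed.

Lemma pi_coef (p : R) u : (piG p)@_u = \sum_(m <- msupp p | key m == u) p@_m.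
Proof. by rewrite piE mcomp_coef. Qed.

Lemma piM (p q : R) : piG (p * q) = piG p * piG q.
Proof. by rewrite /Defs.pi rmorphM. Qed.
Lemma pi1 : piG (1 : R) = 1.
Proof. by rewrite /Defs.pi rmorph1. Qed.
Lemma piB (p q : R) : piG (p - q) = piG p - piG q.
Proof. by rewrite /Defs.pi raddfB. Qed.
Lemma piXn (p : R) m : piG (p ^+ m) = piG p ^+ m.
Proof. by rewrite /Defs.pi rmorphXn. Qed.

Lemma xset_S k : xset K G (S_ k) = 'X_k.
Proof. by rewrite /xset /S_ valK /xvar enum_valK. Qed.

Lemma S_rank S (h : stable G S) : S_ (enum_rank (Sub S h : stype G)) = S.
Proof. by rewrite /S_ enum_rankK. Qed.

Lemma xset_stable S (h : stable G S) : xset K G S = 'X_(enum_rank (Sub S h : stype G)).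
Proof. by rewrite -xset_S S_rank. Qed.

Lemma S_stable k : stable G (S_ k).
Proof. exact: valP. Qed.

Lemma pi_xset S : stable G S -> piG (xset K G S) = svar K d * \prod_(j in S) tvar K j.
Proof.
move=> h; rewrite (xset_stable h) /piG comp_mpolyXt tnth_mktuple /pi_img.
by rewrite -/(S_ _) S_rank.
Qed.

Lemma pi_pair A B : stable G A -> stable G B ->
  piG (xset K G A * xset K G B) =
  svar K d ^+ 2 * \prod_(j < d) tvar K j ^+ ((j \in A) + (j \in B))%N.
Proof.
move=> hA hB; rewrite piM !pi_xset // !prod_in.
rewrite mulrACA -expr2 -big_split /=; congr (_ * _).
by apply: eq_bigr => j _; rewrite exprD.
Qed.

Lemma pi_pair_eq A B C D : stable G A -> stable G B -> stable G C -> stable G D ->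
  (forall j, (j \in A) + (j \in B) = (j \in C) + (j \in D))%N ->
  I_G K G (xset K G A * xset K G B - xset K G C * xset K G D).
Proof.
move=> hA hB hC hD h; rewrite /I_G piB !pi_pair //.
by under eq_bigr do rewrite h; rewrite subrr.
Qed.

Lemma keyE m c : key m c = (\sum_(i < nvar G) img i c * m i)%N.
Proof. exact: mkeyE. Qed.

Lemma keyD m1 m2 : key (m1 + m2)%MM = (key m1 + key m2)%MM.
Proof.
apply/mnmP => c; rewrite mnmDE !keyE -big_split /=.
by apply: eq_bigr => i _; rewrite mnmDE mulnDr.
Qed.

Lemma keyU k : key U_(k)%MM = img k.
Proof.
apply/mnmP => c; rewrite keyE (bigD1 k) //= mnm1E eqxx muln1 big1 ?addn0 //.
by move=> i /negbTE; rewrite mnm1E eq_sym => ->; rewrite muln0.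
Qed.

Lemma key_pair_counts k1 l1 k2 l2 :
  key (U_(k1) + U_(l1))%MM = key (U_(k2) + U_(l2))%MM ->
  forall j, ((j \in S_ k1) + (j \in S_ l1) = (j \in S_ k2) + (j \in S_ l2))%N.
Proof.
rewrite !keyD !keyU => /mnmP h j; move: (h (wd j)).
by rewrite !mnmDE !img_widen.
Qed.


Lemma mdeg2 n (m : 'X_{1..n}) : mdeg m = 2%N -> exists k l, m = (U_(k) + U_(l))%MM.
Proof.
move=> h.
have [i hi] : exists i, m i != 0%N.
  apply/existsP; rewrite -negb_forall; apply/negP => /forallP h0.
  have : m = 0%MM by apply/mnmP => i; rewrite mnm0E; apply/eqP; apply: h0.
  by move=> e; move: h; rewrite e mdeg0.
have le : (U_(i) <= m)%MM.
  by apply/mnm_lepP => j; rewrite mnm1E; case: eqP => [<-|]; rewrite ?lt0n.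
have e := submK le.
have : mdeg (m - U_(i))%MM == 1%N.
  by move: h; rewrite -{1}e mdegD mdeg1 => /eqP; rewrite -[2%N]/(1 + 1)%N eqn_add2r.
case/mdeg1P => l /eqP hl; exists l, i; by rewrite -hl e.
Qed.

Lemma fiber (I : R -> Prop) : is_ideal I ->
  (forall k1 l1 k2 l2, key (U_(k1) + U_(l1))%MM = key (U_(k2) + U_(l2))%MM ->
      I ('X_k1 * 'X_l1 - 'X_k2 * 'X_l2)) ->
  forall p : R, I_G K G p -> p \is 2.-homog -> I p.
Proof.
move=> hI hF p hp hh; rewrite /I_G in hp.
set s := msupp p.
pose r m := nth m [seq m' <- s | key m' == key m] 0.
have szF m : m \in s -> (0 < size [seq m' <- s | key m' == key m])%N.
  by move=> hm; rewrite size_filter -has_count; apply/hasP; exists m => //=.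
have rin m : m \in s -> r m \in s /\ key (r m) = key m.
  move=> hm; have : r m \in [seq m' <- s | key m' == key m] by apply: mem_nth; apply: szF.
  by rewrite mem_filter => /andP [/eqP -> ->].
have rsame m u : m \in s -> key m = key u -> r m = r u.
  by move=> hm hk; rewrite /r -hk; apply: set_nth_default; apply: szF.
have rkey m u : m \in s -> (r m == u) = (key m == key u) && (r u == u).
  move=> hm; have [rs rk] := rin m hm; apply/idP/idP.
    move/eqP => <-; rewrite rk eqxx /=; apply/eqP; exact: rsame.
  by case/andP => /eqP hk /eqP hu; rewrite (rsame m u hm hk) hu.
have q0 : \sum_(m <- s) p@_m *: ('X_[r m] : R) = 0.
  apply/mpolyP => u; rewrite mcoeff0 raddf_sum /=.
  transitivity (\sum_(m <- s | key m == key u) p@_m * (r u == u)%:R).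
    rewrite [RHS]big_mkcond /= big_seq [RHS]big_seq; apply: eq_bigr => m hm.
    rewrite mcoeffZ mcoeffX (rkey m u hm); case: (key m == key u) => //=.
    by rewrite mulr0.
  by rewrite -big_distrl /= -pi_coef hp mcoeff0 mul0r.
have -> : p = \sum_(m <- s) p@_m *: ('X_[m] - 'X_[r m]).
  under eq_bigr do rewrite scalerBr.
  by rewrite sumrB q0 subr0 {1}(mpolyE p).
apply: (id_sum_seq hI) => m hm; apply: (idZ hI).
have [rs rk] := rin m hm.
have dm : mdeg m = 2%N by move/dhomogP: hh; apply.
have dr : mdeg (r m) = 2%N by move/dhomogP: hh; apply.
have [k1 [l1 e1]] := mdeg2 dm; have [k2 [l2 e2]] := mdeg2 dr.
rewrite e2 e1 !mpolyXD; apply: hF; by rewrite -e1 -e2 rk.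
Qed.

End PiComp.

Section Graph.
Variables (K : fieldType) (d : nat) (G : rel 'I_d) (HG : simple_graph G).
Local Notation R := {mpoly K[nvar G]}.
Local Notation T := {mpoly K[d.+1]}.
Local Notation piG := (@Defs.pi K d G).
Local Notation xs := (xset K G).

Lemma Gsym : ssrbool.symmetric G. Proof. by case: HG. Qed.
Lemma Girr : irreflexive G. Proof. by case: HG. Qed.

Lemma stableP (S : {set 'I_d}) : reflect (forall i j, i \in S -> j \in S -> ~~ G i j) (stable G S).
Proof.
apply: (iffP forallP) => [h i j hi hj|h i].
  by move/forallP: (h i) => /(_ j) /implyP; apply; rewrite hi hj.
by apply/forallP => j; apply/implyP => /andP [hi hj]; apply: h.
Qed.

Lemma stable_sub (S S' : {set 'I_d}) : stable G S -> S' \subset S -> stable G S'.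
Proof.
move=> /stableP h /subsetP hs; apply/stableP => i j hi hj; apply: h; exact: hs.
Qed.

Lemma stable0 : stable G set0.
Proof. by apply/stableP => i j; rewrite inE. Qed.

Lemma stable1 i : stable G [set i].
Proof. by apply/stableP => a b; rewrite !inE => /eqP -> /eqP ->; rewrite Girr. Qed.

Lemma IG_ideal : is_ideal (I_G K G).
Proof.
rewrite /I_G; split => [|p q hp hq|p q hq]; first by rewrite /Defs.pi raddf0.
  have -> : piG (p + q) = piG p + piG q by rewrite /Defs.pi raddfD.
  by rewrite hp hq addr0.
by rewrite piM hq mulr0.
Qed.

Lemma L_IG p : L_gens p -> I_G K G p.
Proof.
case=> S [i [hS hi h2 ->]]; apply: pi_pair_eq => //.
- by apply: stable_sub hS _; apply: subD1set.
- exact: stable1.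
- exact: stable0.
- by move=> j; rewrite !inE; case: (eqVneq j i) => [->|] //=; rewrite ?hi //; case: (j \in S).
Qed.

Lemma LG_IG p : L_G K G p -> I_G K G p.
Proof. move=> h; exact: (ig_min IG_ideal L_IG h). Qed.

Local Notation x0 := (xs set0).
Local Notation Lg := (L_G K G).

Lemma Lg_ideal : is_ideal Lg. Proof. exact: ig_ideal. Qed.

Lemma step1 n (S : {set 'I_d}) : stable G S -> #|S| = n ->
  Lg (x0 ^+ #|S| * xs S - x0 * \prod_(i in S) xs [set i]).
Proof.
elim: n S => [|n IH] S hS hc.
  move/eqP: hc; rewrite cards_eq0 => /eqP ->; rewrite cards0 big_set0 expr0 mul1r mulr1 subrr.
  exact: (id0 Lg_ideal).
have [i hi] : exists i, i \in S by apply/card_gt0P; rewrite hc.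
have hc' : #|S :\ i| = n by move: hc; rewrite (cardsD1 i S) hi add1n => -[].
have hS' : stable G (S :\ i) by apply: stable_sub hS _; apply: subD1set.
have IH' := IH _ hS' hc'.
rewrite (big_setD1 i hi) /= hc.
case: n IH hc hc' IH' => [|n] _ hc hc' IH'.
  move/eqP: hc'; rewrite cards_eq0 => /eqP e.
  have eS : S = [set i] by rewrite -(setD1K hi) e setU0.
  rewrite e big_set0 mulr1 expr1 eS subrr; exact: (id0 Lg_ideal).
have g : Lg (xs (S :\ i) * xs [set i] - xs S * x0).
  by apply: ig_gen; exists S, i; split => //; rewrite hc.
rewrite hc' in IH'.
have -> : x0 ^+ n.+2 * xs S - x0 * (xs [set i] * \prod_(j in S :\ i) xs [set j]) =
  xs [set i] * (x0 ^+ n.+1 * xs (S :\ i) - x0 * \prod_(j in S :\ i) xs [set j])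
  - x0 ^+ n.+1 * (xs (S :\ i) * xs [set i] - xs S * x0).
  rewrite !exprS; ring.
by apply: (idB Lg_ideal); apply: (idM Lg_ideal).
Qed.


Definition etaf (j : 'I_d.+1) : R := if ocd j is Some i then xs [set i] else x0.
Definition etat : d.+1.-tuple R := [tuple etaf j | j < d.+1].
Local Notation eta p := (comp_mpoly etat p).

Lemma eta_s : eta (svar K d) = x0.
Proof. by rewrite /svar comp_mpolyXt tnth_mktuple /etaf ocd_max. Qed.
Lemma eta_t i : eta (tvar K i) = xs [set i].
Proof. by rewrite /tvar comp_mpolyXt tnth_mktuple /etaf -/(wd i) ocd_widen. Qed.

Definition thv (k : 'I_(nvar G)) : T :=
  svar K d ^+ (d - #|S_ k|) * (svar K d * \prod_(i in S_ k) tvar K i).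
Definition tht : (nvar G).-tuple T := [tuple thv k | k < nvar G].

Lemma cardS_le (S : {set 'I_d}) : (#|S| <= d)%N.
Proof. by rewrite -[X in (_ <= X)%N]card_ord max_card. Qed.

Lemma step2 k : Lg (x0 ^+ d * 'X_k - eta (thv k)).
Proof.
rewrite /thv rmorphM rmorphXn rmorphM rmorph_prod /= eta_s.
under eq_bigr do rewrite eta_t.
have e : x0 ^+ d = x0 ^+ (d - #|S_ k|) * x0 ^+ #|S_ k| by rewrite -exprD subnK // cardS_le.
rewrite -xset_S e -mulrA -mulrBr.
apply: (idM Lg_ideal); exact: (step1 (S_stable k) erefl).
Qed.

Lemma step3 m : Lg (x0 ^+ (d * mdeg m) * 'X_[m] - eta ('X_[m] \mPo tht)).
Proof.
rewrite comp_mpolyX rmorph_prod /= mpolyXE_id mdegE exprM -prodrXr -big_split /=.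
have -> : \prod_(i < nvar G) eta (tnth tht i ^+ m i) =
          \prod_(i < nvar G) eta (thv i) ^+ m i.
  by apply: eq_bigr => i _; rewrite rmorphXn tnth_mktuple.
have -> : \prod_(i < nvar G) ((x0 ^+ d) ^+ m i * 'X_i ^+ m i) =
          \prod_(i < nvar G) (x0 ^+ d * 'X_i) ^+ m i.
  by apply: eq_bigr => i _; rewrite exprMn.
apply: (idc_prod Lg_ideal) => i; exact: step2.
Qed.

Lemma step4 (f : R) : exists h, Lg (x0 ^+ (d * msize f) * f - eta h).
Proof.
pose N := (d * msize f)%N.
pose h := \sum_(m <- msupp f) f@_m *: (svar K d ^+ (N - d * mdeg m) * ('X_[m] \mPo tht)).
exists h; rewrite -/N.
have eh : eta h = \sum_(m <- msupp f) f@_m *: (x0 ^+ (N - d * mdeg m) * eta ('X_[m] \mPo tht)).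
  rewrite /h raddf_sum; apply: eq_bigr => m _.
  transitivity (eta (f@_m *: (svar K d ^+ (N - d * mdeg m) * ('X_[m] \mPo tht)))); first by [].
  by rewrite comp_mpolyZ rmorphM rmorphXn /= eta_s.
rewrite eh {1}(mpolyE f) mulr_sumr -sumrB.
apply: (id_sum_seq Lg_ideal) => m hm.
have hD : (d * mdeg m <= N)%N by rewrite /N leq_mul2l ltnW ?orbT // msize_mdeg_lt.
rewrite -scalerAr -scalerBr; apply: (idZ Lg_ideal).
have e : x0 ^+ N = x0 ^+ (N - d * mdeg m) * x0 ^+ (d * mdeg m) by rewrite -exprD subnK.
rewrite e -mulrA -mulrBr; apply: (idM Lg_ideal); exact: step3.
Qed.


Definition kim (j : 'I_d.+1) : 'X_{1..d.+1} :=
  if ocd j is Some i then (U_(ord_max) + U_(wd i))%MM else U_(ord_max)%MM.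

Lemma pi_eta q : piG (eta q) = q \mPo mtup K kim.
Proof.
rewrite /Defs.pi comp_mpoly_comp; congr (comp_mpoly _ q); apply: eq_from_tnth => j.
rewrite !tnth_mktuple /etaf /kim -/(Defs.pi _).
case: (ocd j) => [i|].
  by rewrite pi_xset ?stable1 // big_set1 mpolyXD.
by rewrite pi_xset ?stable0 // big_set0 mulr1.
Qed.

Lemma wd_max i : ((@ord_max d) == wd i) = false.
Proof. by apply/negbTE; rewrite -val_eqE /= neq_ltn ltn_ord orbT. Qed.

Lemma kim_inj : injective (mkey kim).
Proof.
move=> a b h.
have hw : forall (x : 'X_{1..d.+1}) i, mkey kim x (wd i) = x (wd i).
  move=> x i; rewrite mkeyE (bigD1 (wd i)) //= big1 ?addn0.
    by rewrite /kim ocd_widen mnmDE !mnm1E wd_max eqxx mul1n.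
  move=> j hj; case: (ord_cases j) => [[i' ej]|ej]; rewrite ej /kim.
    rewrite ocd_widen mnmDE !mnm1E wd_max.
    by move: hj; rewrite ej => /negbTE ->.
  by rewrite ocd_max mnm1E wd_max.
have hm : forall (x : 'X_{1..d.+1}), mkey kim x ord_max = (\sum_j x j)%N.
  move=> x; rewrite mkeyE; apply: eq_bigr => j _.
  case: (ord_cases j) => [[i' ->]|->]; rewrite /kim ?ocd_widen ?ocd_max.
    by rewrite mnmDE !mnm1E eqxx eq_sym wd_max addn0 mul1n.
  by rewrite mnm1E eqxx mul1n.
apply/mnmP => c; case: (ord_cases c) => [[i ->]|->].
  by rewrite -(hw a) -(hw b) h.
have := hm a; rewrite h hm !big_ord_recr /=.
have -> : (\sum_(i < d) a (widen_ord (leqnSn d) i) = \sum_(i < d) b (widen_ord (leqnSn d) i))%N.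
  by apply: eq_bigr => i _; rewrite -/(wd i) -(hw a) -(hw b) h.
by move/addnI.
Qed.

Lemma main_loc f : I_G K G f -> exists N, Lg (x0 ^+ N * f).
Proof.
move=> hf; exists (d * msize f)%N; have [h hL] := step4 f.
have pih : piG (eta h) = 0.
  have := LG_IG hL; rewrite /I_G piB piM piXn.
  by rewrite /I_G in hf; rewrite hf mulr0 sub0r => /eqP; rewrite oppr_eq0 => /eqP.
have h0 : h = 0 by apply: (mcomp_inj kim_inj); rewrite -pi_eta.
by move: hL; rewrite h0 comp_mpoly0 subr0.
Qed.

Lemma x0_notin : ~ I_G K G x0.
Proof.
rewrite /I_G pi_xset ?stable0 // big_set0 mulr1 /svar.
move/(congr1 (mcoeff U_(ord_max))); rewrite mcoeffX eqxx mcoeff0 => /eqP.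
by rewrite oner_eq0.
Qed.

Lemma IG_prime : prime_ideal (I_G K G).
Proof.
split; first by rewrite /I_G pi1; apply/eqP; rewrite oner_eq0.
move=> a b; rewrite /I_G piM => /eqP; rewrite mulf_eq0 => /orP [] /eqP; by [left|right].
Qed.

Lemma part_a (A : R -> Prop) : (forall p, L_gens p -> ideal_gen A p) ->
  (forall p, A p -> I_G K G p) ->
  (prime_ideal (ideal_gen A) <-> ideal_eq (ideal_gen A) (I_G K G)).
Proof.
move=> hL hA; have sub : forall p, ideal_gen A p -> I_G K G p := ig_min IG_ideal hA.
split.
  case=> _ hpr p; split; first exact: sub.
  move=> hp; have [N hN] := main_loc hp.
  have := ig_min (ig_ideal A) hL hN; clear hN.
  elim: N => [|N ih]; first by rewrite expr0 mul1r.
  rewrite exprS -mulrA => /hpr [/sub /x0_notin //|]; exact: ih.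
move=> heq; have [h1 h2] := IG_prime; split.
  by move/heq.
by move=> a b /heq /h2 [] /heq; [left|right].
Qed.

Lemma homogXX (k l : 'I_(nvar G)) : ('X_k * 'X_l : R) \is 2.-homog.
Proof. by rewrite -mpolyXD dhomogX; change (mdeg (U_(k) + U_(l))%MM == 2%N); rewrite mdegD !mdeg1. Qed.

Lemma homog_xs A B C D : stable G A -> stable G B -> stable G C -> stable G D ->
  xs A * xs B - xs C * xs D \is 2.-homog.
Proof.
move=> hA hB hC hD; rewrite (xset_stable K hA) (xset_stable K hB) (xset_stable K hC) (xset_stable K hD).
by apply: rpredB; apply: homogXX.
Qed.

Lemma count_disj (A B : {set 'I_d}) j : A :&: B = set0 ->
  ((j \in A) + (j \in B))%N = (j \in A :|: B).
Proof.
move/setP/(_ j); rewrite !inE; case: (j \in A); case: (j \in B) => //.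
Qed.

Lemma J_IG (p : R) : J_gens p -> I_G K G p.
Proof.
case=> [S1 [S2 [S3 [S4 [[h1 h2 h3 h4] [e12 e34 eU ->]]]]]].
by apply: pi_pair_eq => // j; rewrite !count_disj // eU.
Qed.

Lemma J_homog (p : R) : J_gens p -> p \is 2.-homog.
Proof.
case=> [S1 [S2 [S3 [S4 [[h1 h2 h3 h4] [e12 e34 eU ->]]]]]]; exact: homog_xs.
Qed.

Lemma L_J (p : R) : L_gens p -> J_gens p.
Proof.
case=> S [i [hS hi h2 ->]]; exists (S :\ i), [set i], S, set0; split.
  split => //; [by apply: stable_sub hS _; apply: subD1set|exact: stable1|exact: stable0].
split => //; last by rewrite setU0 setUC setD1K.
  by apply/setP => j; rewrite !inE; case: (j == i); rewrite ?andbF.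
by rewrite setI0.
Qed.

Lemma L_homog (p : R) : L_gens p -> p \is 2.-homog.
Proof. by move/L_J; apply: J_homog. Qed.

Lemma partA :
  [/\ (prime_ideal (I_G2 K G) <-> ideal_eq (I_G2 K G) (I_G K G)),
      (prime_ideal (J_G K G) <-> ideal_eq (J_G K G) (I_G K G))
    & (prime_ideal (L_G K G) <-> ideal_eq (L_G K G) (I_G K G))].
Proof.
split.
- apply: part_a; last by move=> p [].
  by move=> p hp; apply: ig_gen; split; [apply: L_IG|apply: L_homog].
- apply: part_a; last exact: J_IG.
  by move=> p hp; apply: ig_gen; apply: L_J.
- apply: part_a; last exact: L_IG.
  by move=> p hp; apply: ig_gen.
Qed.

Lemma XX_IG k1 l1 k2 l2 : key (U_(k1) + U_(l1))%MM = key (U_(k2) + U_(l2))%MM ->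
  I_G K G ('X_k1 * 'X_l1 - 'X_k2 * 'X_l2 : R).
Proof. by move=> e; rewrite /I_G piB -!mpolyXD !piX e subrr. Qed.

Lemma xvar_X k : xvar K (enum_val k) = ('X_k : R).
Proof. by rewrite /xvar enum_valK. Qed.

Lemma partB : ideal_eq (I_G K G) (I_G2 K G) <-> IG_gen_by_quad_binomials K G.
Proof.
pose B (p : R) := I_G K G p /\ quad_binomial p.
have BIG : forall p, ideal_gen B p -> I_G K G p.
  by move=> p; apply: (ig_min IG_ideal) => q [].
split.
  move=> heq; exists B; split; first by move=> p [].
  move=> p; split; last exact: BIG.
  move/heq => hp; apply: (ig_min (ig_ideal B) _ hp) => q [hq hh].
  apply: (fiber (ig_ideal B)) hq hh => k1 l1 k2 l2 e.
  apply: ig_gen; split; first exact: XX_IG.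
  by exists (enum_val k1), (enum_val l1), (enum_val k2), (enum_val l2); rewrite !xvar_X.
case=> B' [hB heq] p; split.
  move/heq => hp; apply: (ig_min (ig_ideal _) _ hp) => q hq; apply: ig_gen; split.
    by apply/heq; apply: ig_gen.
  have [a [b [c [e ->]]]] := hB q hq.
  rewrite /xvar; by apply: rpredB; apply: homogXX.
by move=> hp; apply: (ig_min IG_ideal _ hp) => q [].
Qed.

Lemma tri3 (X : {set 'I_d}) x y z : stable G X -> x \in X -> y \in X -> z \in X ->
  x != y -> y != z -> x != z -> compl_has_triangle G.
Proof.
move=> /stableP h hx hy hz nxy nyz nxz; exists x, y, z; split; first by split.
by split; apply: h.
Qed.

Lemma neq_set (X Y : {set 'I_d}) x : x \in X -> x \notin Y -> (X == Y) = false.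
Proof. by move=> hx hy; apply/negbTE/eqP => e; move: hy; rewrite -e hx. Qed.

Lemma neq_set' (X Y : {set 'I_d}) x : x \notin X -> x \in Y -> (X == Y) = false.
Proof. by move=> hx hy; apply/negbTE/eqP => e; move: hx; rewrite e hy. Qed.

Definition evZ (Z : {set 'I_d} -> bool) : 'I_(nvar G) -> K := fun k => (Z (S_ k))%:R.

Lemma ev_xs Z S : stable G S -> (xs S).@[evZ Z] = (Z S)%:R.
Proof. by move=> h; rewrite (xset_stable K h) mevalXU /evZ S_rank. Qed.

Lemma ev_pair Z A B C D : stable G A -> stable G B -> stable G C -> stable G D ->
  (xs A * xs B - xs C * xs D).@[evZ Z] = (Z A && Z B)%:R - (Z C && Z D)%:R.
Proof.
move=> hA hB hC hD; rewrite mevalB !mevalM !ev_xs //.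
by case: (Z A); case: (Z B); case: (Z C); case: (Z D); rewrite ?mul1r ?mul0r.
Qed.

Lemma stable3 a b c : ~~ G a b -> ~~ G b c -> ~~ G a c -> stable G [set a; b; c].
Proof.
move=> hab hbc hac; apply/stableP => i j; rewrite !inE.
move=> hi hj; case/orP: hi => [/orP [] | ] /eqP ->; case/orP: hj => [/orP [] | ] /eqP ->; by rewrite ?Girr // Gsym.
Qed.

Lemma combC A B C D : ~ compl_has_triangle G ->
  stable G A -> stable G B -> stable G C -> stable G D ->
  (forall j, (j \in A) + (j \in B) = (j \in C) + (j \in D))%N ->
  J_G K G (xs A * xs B - xs C * xs D).
Proof.
move=> nt hA hB hC hD hc.
case: (boolP [exists j, (j \in A) && (j \in B)]) => [/existsP [j0 /andP [a0 b0]]|hn].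
  have := hc j0; rewrite a0 b0.
  case c0 : (j0 \in C); case d0 : (j0 \in D) => // _.
  have claim : (forall j, (j \in A) = (j \in C)) \/ (forall j, (j \in A) = (j \in D)).
    case: (boolP [forall j, (j \in A) == (j \in C)]) => [/forallP h1|/forallPn [j1 hj1]].
      by left => j; apply/eqP.
    case: (boolP [forall j, (j \in A) == (j \in D)]) => [/forallP h2|/forallPn [j2 hj2]].
      by right => j; apply/eqP.
    exfalso; apply: nt; move: (hc j1) (hc j2) hj1 hj2.
    case a1: (j1 \in A); case b1: (j1 \in B); case c1: (j1 \in C); case e1: (j1 \in D);
    case a2: (j2 \in A); case b2: (j2 \in B); case c2: (j2 \in C); case e2: (j2 \in D);
    move=> /= h1 h2 hj1 hj2; try discriminate;
    first [ apply: (tri3 hA a0 a1 a2) | apply: (tri3 hD d0 e1 e2)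
          | apply: (tri3 hC c0 c1 c2) | apply: (tri3 hB b0 b1 b2) ];
    by apply/eqP => e; subst; congruence.
  case: claim => h.
    have eAC : A = C by apply/setP => j; apply: h.
    have eBD : B = D.
      apply/setP => j; have := hc j; rewrite h => /addnI.
      by case: (j \in B); case: (j \in D).
    by rewrite eAC eBD subrr; apply: (id0 (ig_ideal _)).
  have eAD : A = D by apply/setP => j; apply: h.
  have eBC : B = C.
    apply/setP => j; have := hc j; rewrite h addnC => /addIn.
    by case: (j \in B); case: (j \in C).
  by rewrite eAD eBC mulrC subrr; apply: (id0 (ig_ideal _)).
apply: ig_gen; exists A, B, C, D; split; first by split.
have hn' : forall j, ~~ ((j \in A) && (j \in B)) by move=> j; move/existsPn: hn; apply.
split => //.
- by apply/setP => j; rewrite !inE; apply/negbTE; apply: hn'.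
- apply/setP => j; rewrite !inE; have := hc j; have := hn' j.
  by case: (j \in A); case: (j \in B); case: (j \in C); case: (j \in D).
- apply/setP => j; rewrite !inE; have := hc j.
  by case: (j \in A); case: (j \in B); case: (j \in C); case: (j \in D).
Qed.

Lemma partC : ideal_eq (I_G2 K G) (J_G K G) <-> ~ compl_has_triangle G.
Proof.
split.
  move=> heq [a [b [c [[hab hbc hac] [nab nbc nac]]]]].
  have h3 := stable3 nab nbc nac.
  have s1 : stable G [set a; b].
    by apply: stable_sub h3 _; apply/subsetP => x; rewrite !inE => /orP [] ->; rewrite ?orbT.
  have s2 : stable G [set b; c].
    by apply: stable_sub h3 _; apply/subsetP => x; rewrite !inE => /orP [] ->; rewrite ?orbT.
  have s4 : stable G [set b].
    by apply: stable1.
  have hp : J_G K G (xs [set a; b] * xs [set b; c] - xs [set a; b; c] * xs [set b]).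
    apply/heq; apply: ig_gen; split; last exact: homog_xs.
    apply: pi_pair_eq => // j; rewrite !inE.
    have [->|ja] := eqVneq j a; first by rewrite (negbTE hab) (negbTE hac).
    have [->|jb] := eqVneq j b => //=.
    by rewrite addn0.
  pose Z := fun X : {set 'I_d} => (X == [set a; b]) || (X == [set b; c]).
  have hZ : forall X, Z X -> b \in X.
    by move=> X /orP [] /eqP ->; rewrite !inE eqxx ?orbT.
  have Jv : forall q, J_gens q -> q.@[evZ Z] = 0.
    move=> q [S1 [S2 [S3 [S4 [[h1 h2 h3' h4] [e12 e34 eU ->]]]]]].
    rewrite ev_pair //.
    have nz : forall X Y : {set 'I_d}, X :&: Y = set0 -> (Z X && Z Y) = false.
      move=> X Y e; apply/negbTE/andP => -[/hZ hx /hZ hy].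
      by move/setP: e => /(_ b); rewrite !inE hx hy.
    by rewrite !nz // subrr.
  have := ig_min (ev_ideal (evZ Z)) Jv hp.
  rewrite ev_pair //.
  have -> : Z [set a; b] && Z [set b; c] = true by rewrite /Z !eqxx ?orbT.
  have -> : Z [set a; b; c] && Z [set b] = false.
    rewrite andbC /Z (@neq_set' [set b] [set a; b] a) ?(@neq_set' [set b] [set b; c] c) //.
    all: try by rewrite !inE ?eqxx ?orbT // eq_sym.
  by move/eqP; rewrite subr0 oner_eq0.
move=> nt p; split.
  move=> hp; apply: (ig_min (ig_ideal _) _ hp) => q [hq hh].
  apply: (fiber (ig_ideal (@J_gens K d G)) _ hq hh) => k1 l1 k2 l2 e.
  rewrite -!(xset_S K); apply: combC => //; try exact: S_stable.
  exact: key_pair_counts.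
move=> hp; apply: (ig_min (ig_ideal _) _ hp) => q hq; apply: ig_gen.
by split; [exact: J_IG | exact: J_homog].
Qed.

Lemma stable2 a b : ~~ G a b -> stable G [set a; b].
Proof.
move=> hab; apply/stableP => i j; rewrite !inE.
by move=> hi hj; case/orP: hi => /eqP ->; case/orP: hj => /eqP ->; rewrite ?Girr // Gsym.
Qed.

Lemma set1_neq2 (i u v : 'I_d) : u != v -> ([set i] == [set u; v]) = false.
Proof.
move=> huv; apply/negbTE/eqP => e.
have : u \in [set i] by rewrite e !inE eqxx.
have : v \in [set i] by rewrite e !inE eqxx orbT.
by rewrite !inE => /eqP hv /eqP hu; move: huv; rewrite hu hv eqxx.
Qed.

Lemma Lvanish Z :
  (forall S i, stable G S -> i \in S -> Z (S :\ i) && Z [set i] = false) ->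
  Z set0 = false -> forall q : R, L_gens q -> q.@[evZ Z] = 0.
Proof.
move=> h1 h0 q [S [i [hS hi h2 ->]]].
rewrite ev_pair ?h1 ?h0 ?andbF ?subrr //.
- by apply: stable_sub hS _; apply: subD1set.
- exact: stable1.
- exact: stable0.
Qed.

Lemma Lred S1 S2 : stable G S1 -> stable G S2 -> S1 :&: S2 = set0 ->
  stable G (S1 :|: S2) -> (#|S1| <= 1)%N ->
  Lg (xs S1 * xs S2 - x0 * xs (S1 :|: S2)).
Proof.
move=> h1 h2 e12 hU; rewrite leq_eqVlt ltnS leqn0 orbC => /orP [].
  rewrite cards_eq0 => /eqP ->; rewrite set0U subrr; exact: (id0 Lg_ideal).
case/cards1P => i ei; rewrite ei in e12 hU *.
case: (eqVneq S2 set0) => [->|/set0Pn [j hj]].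
  by rewrite setU0 mulrC subrr; apply: (id0 Lg_ideal).
have hij : i != j.
  apply/eqP => eij; move/setP: e12 => /(_ i); by rewrite !inE eqxx eij hj.
have eD : ([set i] :|: S2) :\ i = S2.
  apply/setP => x; rewrite !inE; case: (eqVneq x i) => [->|] //=.
  move/setP: e12 => /(_ i); rewrite !inE eqxx /= => ->; by [].
have g : Lg (xs (([set i] :|: S2) :\ i) * xs [set i] - xs ([set i] :|: S2) * x0).
  apply: ig_gen; exists ([set i] :|: S2), i; split => //; first by rewrite !inE eqxx.
  apply/card_gt1P; exists i, j; split => //; rewrite !inE ?eqxx ?hj ?orbT //.
by move: g; rewrite eD mulrC [xs _ * x0]mulrC.
Qed.

Lemma Lred' S1 S2 : stable G S1 -> stable G S2 -> S1 :&: S2 = set0 ->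
  stable G (S1 :|: S2) -> (#|S2| <= 1)%N ->
  Lg (xs S1 * xs S2 - x0 * xs (S1 :|: S2)).
Proof.
move=> h1 h2 e12 hU c2; rewrite mulrC setUC; apply: Lred => //; first by rewrite setIC.
by rewrite setUC.
Qed.

Lemma disjP (A B : {set 'I_d}) : (forall x, x \in A -> x \in B -> False) -> A :&: B = set0.
Proof. by move=> h; apply/setP => x; rewrite !inE; apply/negbTE/andP => -[]; apply: h. Qed.

Lemma disj_22 (a b c e : 'I_d) : a != c -> a != e -> b != c -> b != e ->
  [set a; b] :&: [set c; e] = set0.
Proof.
move=> h1 h2 h3 h4; apply: disjP => x; rewrite !inE.
by case/orP => /eqP -> /orP [] /eqP E; [move: h1|move: h2|move: h3|move: h4]; rewrite E eqxx.
Qed.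

Lemma disj_21 (a b c : 'I_d) : a != c -> b != c -> [set a; b] :&: [set c] = set0.
Proof.
move=> h1 h2; apply: disjP => x; rewrite !inE.
by case/orP => /eqP -> /eqP E; [move: h1|move: h2]; rewrite E eqxx.
Qed.

Lemma disj_12 (a b c : 'I_d) : a != b -> a != c -> [set a] :&: [set b; c] = set0.
Proof. by move=> h1 h2; rewrite setIC; apply: disj_21; rewrite eq_sym. Qed.

Section PartDRev.
Variables (P : {set {set 'I_d}}) (hP : partition P [set: 'I_d])
  (hG : forall i j, G i j = (pblock P i != pblock P j))
  (hV : forall V, V \in P -> (#|V| <= 3)%N).

Lemma nadjE x y : ~~ G x y = (pblock P x == pblock P y).
Proof. by rewrite hG negbK. Qed.

Lemma covP x : x \in cover P.
Proof. by case/and3P: hP => /eqP -> _ _; rewrite in_setT. Qed.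

Lemma stable_blk U : stable G U -> (#|U| <= 3)%N.
Proof.
move=> hU; case: (set_0Vmem U) => [->|[u0 hu0]]; first by rewrite cards0.
apply: leq_trans (hV (pblock_mem (covP u0))).
apply: subset_leq_card; apply/subsetP => x hx.
move/stableP: hU => /(_ u0 x hu0 hx); rewrite nadjE => /eqP ->.
by rewrite mem_pblock covP.
Qed.

Lemma sideL S1 S2 x y : stable G S1 -> stable G S2 -> ~~ stable G (S1 :|: S2) ->
  x \in S1 -> y \in S1 :|: S2 -> (y \in S1) = ~~ G x y.
Proof.
move=> h1 h2 hU hx hy; case hy1 : (y \in S1).
  by move/stableP: h1 => /(_ x y hx hy1) ->.
have hy2 : y \in S2 by move: hy; rewrite inE hy1.
case: (boolP (G x y)) => // nxy; exfalso; move/negP: hU; apply.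
have pb : forall w, w \in S1 :|: S2 -> pblock P w = pblock P x.
  move=> w; rewrite inE => /orP [] hw.
    by move/stableP: h1 => /(_ x w hx hw); rewrite nadjE => /eqP ->.
  move/stableP: h2 => /(_ y w hy2 hw); rewrite nadjE => /eqP <-.
  by move: nxy; rewrite nadjE => /eqP ->.
by apply/stableP => u v hu hv; rewrite nadjE (pb u hu) (pb v hv).
Qed.

Lemma compl_part (S1 S2 : {set 'I_d}) : S1 :&: S2 = set0 -> S2 = (S1 :|: S2) :\: S1.
Proof.
move=> e; apply/setP => x; rewrite !inE; case h1 : (x \in S1); case h2 : (x \in S2) => //=.
by move/setP: e => /(_ x); rewrite !inE h1 h2.
Qed.

Lemma card_split (S1 S2 : {set 'I_d}) : S1 :&: S2 = set0 -> stable G (S1 :|: S2) ->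
  (#|S1| <= 1)%N \/ (#|S2| <= 1)%N.
Proof.
move=> e hU; have := stable_blk hU; rewrite cardsU e cards0 subn0.
case: (leqP #|S1| 1) => h; first by left.
case: (leqP #|S2| 1) => h' ; first by right.
by move=> c; exfalso; move: (leq_add h h'); rewrite leqNgt ltnS c.
Qed.

Lemma J_L (q : R) : J_gens q -> Lg q.
Proof.
move=> [S1 [S2 [S3 [S4 [[h1 h2 h3 h4] [e12 e34 eU ->]]]]]].
case: (boolP (stable G (S1 :|: S2))) => hU.
  have hU' : stable G (S3 :|: S4) by rewrite -eU.
  have r12 : Lg (xs S1 * xs S2 - x0 * xs (S1 :|: S2)).
    by case: (card_split e12 hU); [apply: Lred|apply: Lred'].
  have r34 : Lg (xs S3 * xs S4 - x0 * xs (S3 :|: S4)).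
    by case: (card_split e34 hU'); [apply: Lred|apply: Lred'].
  rewrite eU in r12.
  have -> : xs S1 * xs S2 - xs S3 * xs S4 =
    (xs S1 * xs S2 - x0 * xs (S3 :|: S4)) - (xs S3 * xs S4 - x0 * xs (S3 :|: S4)).
    by rewrite opprB addrA subrK.
  exact: (idB Lg_ideal).
have hU' : ~~ stable G (S3 :|: S4) by rewrite -eU.
have [x hx] : exists x, x \in S1.
  apply/set0Pn; apply: contraNneq hU => e; by rewrite e set0U.
have hxU : x \in S3 :|: S4 by rewrite -eU inE hx.
have s1 := sideL h1 h2 hU hx.
case/setUP: hxU => hx'.
  have s3 := sideL h3 h4 hU' hx'.
  have e13 : S1 = S3.
    apply/setP => y; case: (boolP (y \in S1 :|: S2)) => hy.
      by rewrite (s1 y hy) (s3 y); rewrite -?eU.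
    have hy' : y \notin S3 :|: S4 by rewrite -eU.
    by move: hy hy'; rewrite !inE !negb_or => /andP [/negbTE -> _] /andP [/negbTE -> _].
  have e24 : S2 = S4 by rewrite (compl_part e12) (compl_part e34) eU e13.
  by rewrite e13 e24 subrr; apply: (id0 Lg_ideal).
have hU4 : ~~ stable G (S4 :|: S3) by rewrite setUC.
have s4 := sideL h4 h3 hU4 hx'.
have e14 : S1 = S4.
  apply/setP => y; case: (boolP (y \in S1 :|: S2)) => hy.
    by rewrite (s1 y hy) (s4 y); rewrite // setUC -eU.
  have hy' : y \notin S3 :|: S4 by rewrite -eU.
  by move: hy hy'; rewrite !inE !negb_or => /andP [/negbTE -> _] /andP [_ /negbTE ->].
have e23 : S2 = S3.
  by rewrite (compl_part e12) eU e14 [S3 :|: S4]setUC -(compl_part (etrans (setIC S4 S3) e34)).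
by rewrite e14 e23 mulrC subrr; apply: (id0 Lg_ideal).
Qed.

End PartDRev.

Lemma ev_false Z (p : R) : Lg p -> (forall q : R, L_gens q -> q.@[evZ Z] = 0) ->
  p.@[evZ Z] = 0.
Proof. by move=> hp hv; apply: (ig_min (ev_ideal (evZ Z)) hv hp). Qed.

Lemma partD : ideal_eq (J_G K G) (L_G K G) <-> complete_multipartite_le3 G.
Proof.
have LJ : forall p, L_G K G p -> J_G K G p.
  by move=> p hp; apply: (ig_min (ig_ideal _) _ hp) => q hq; apply: ig_gen; apply: L_J.
split; last first.
  case=> P [hP hG hV] p; split; last exact: LJ.
  by move=> hp; apply: (ig_min Lg_ideal _ hp) => q; apply: (J_L hP hG hV).
move=> heq.
have tr : forall a b c, ~~ G a b -> ~~ G b c -> ~~ G a c.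
  move=> a b c nab nbc; apply/negP => gac.
  case: (eqVneq a b) => [eab|hab]; first by move: nbc; rewrite -eab gac.
  case: (eqVneq b c) => [ebc|hbc]; first by move: nab; rewrite ebc gac.
  have hac : a != c by apply/eqP => eac; move: gac; rewrite eac Girr.
  have sab := stable2 nab; have sbc := stable2 nbc.
  have hp : Lg (xs [set a; b] * xs [set c] - xs [set a] * xs [set b; c]).
    apply/heq; apply: ig_gen; exists [set a; b], [set c], [set a], [set b; c].
    split; first by split => //; apply: stable1.
    split => //; [exact: disj_21|exact: disj_12|].
    by apply/setP => x; rewrite !inE orbA.
  pose Z := fun X : {set 'I_d} => (X == [set a; b]) || (X == [set c]).
  have := ev_false (Z := Z) hp.
  rewrite ev_pair ?stable1 //.
  have -> : Z [set a; b] && Z [set c] = true by rewrite /Z !eqxx ?orbT.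
  have -> : Z [set a] = false.
    rewrite /Z set1_neq2 //= (@neq_set [set a] [set c] a) // !inE ?eqxx //.
  rewrite andFb subr0 => H; have : (1 : K) = 0.
    apply: H => q; apply: Lvanish.
      move=> S i hS hi; rewrite /Z set1_neq2 // /=.
      case: (eqVneq i c) => [eic|nic]; last first.
        rewrite (@neq_set [set i] [set c] i) ?andbF // !inE ?eqxx //.
      rewrite eic eqxx andbT; apply/negbTE; rewrite negb_or; apply/andP; split.
        apply/negP => /eqP e; have : a \in S :\ c by rewrite e !inE eqxx.
        rewrite !inE => /andP [_ haS].
        by move/stableP: hS => /(_ a c haS); rewrite -eic hi => /(_ isT); rewrite eic gac.
      apply/negP => /eqP e; have : c \in S :\ c by rewrite e !inE.
      by rewrite !inE eqxx.
    rewrite /Z (@neq_set' set0 [set a; b] a) ?(@neq_set' set0 [set c] c) // !inE ?eqxx //.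
  by move/eqP; rewrite oner_eq0.
pose E := fun x y : 'I_d => ~~ G x y.
have eqE : {in [set: 'I_d] & &, equivalence_rel E}.
  move=> x y z _ _ _; split; first by rewrite /E Girr.
  move=> exy; apply/idP/idP => h; last exact: tr exy h.
  by apply: tr _ h; rewrite Gsym.
set P := equivalence_partition E [set: 'I_d].
have hP : partition P [set: 'I_d] := equivalence_partitionP eqE.
have pbE : forall x y, (y \in pblock P x) = E x y.
  by move=> x y; apply: (pblock_equivalence_partition eqE); rewrite in_setT.
have [hcov htriv _] := and3P hP.
exists P; split => //.
  move=> i j; rewrite eq_pblock //; last by rewrite (eqP hcov) in_setT.
  by rewrite pbE /E negbK.
move=> V hV; rewrite leqNgt; apply/negP => c4.
have [a ha] : exists a, a \in V.
  by apply/set0Pn; apply: contraTneq c4 => ->; rewrite cards0.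
have : (2 < #|V :\ a|)%N by move: c4; rewrite (cardsD1 a) ha.
case/card_gt2P => x [y [z [[hx hy hz] [hxy hyz hzx]]]].
have nadj : forall u v, u \in V -> v \in V -> ~~ G u v.
  by move=> u v hu hv; rewrite -/(E u v) -pbE (def_pblock htriv hV hu).
have inV : forall u, u \in V :\ a -> u \in V by move=> u; rewrite inE => /andP [].
have neA : forall u, u \in V :\ a -> a != u by move=> u; rewrite !inE eq_sym => /andP [].
have hax := neA x hx; have hay := neA y hy; have haz := neA z hz.
have hzx' : x != z by rewrite eq_sym.
have hyx : y != x by rewrite eq_sym.
have sax := stable2 (nadj a x ha (inV x hx)).
have syz := stable2 (nadj y z (inV y hy) (inV z hz)).
have say := stable2 (nadj a y ha (inV y hy)).
have sxz := stable2 (nadj x z (inV x hx) (inV z hz)).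
have hp : Lg (xs [set a; x] * xs [set y; z] - xs [set a; y] * xs [set x; z]).
  apply/heq; apply: ig_gen; exists [set a; x], [set y; z], [set a; y], [set x; z].
  split; first by split.
  split => //; try exact: disj_22.
  apply/setP => u; rewrite !inE.
  by case: (u == a); case: (u == x); case: (u == y); case: (u == z).
pose Z := fun X : {set 'I_d} => (X == [set a; x]) || (X == [set y; z]).
have := ev_false (Z := Z) hp.
rewrite ev_pair //.
have -> : Z [set a; x] && Z [set y; z] = true by rewrite /Z !eqxx ?orbT.
have -> : Z [set a; y] = false.
  rewrite /Z (@neq_set [set a; y] [set a; x] y) ?(@neq_set [set a; y] [set y; z] a) //.
  1-4: rewrite !inE ?eqxx ?orbT //= negb_or; apply/andP; split => //; by rewrite eq_sym.
rewrite andFb subr0 => H; have : (1 : K) = 0.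
  apply: H => q; apply: Lvanish.
    by move=> S i hS hi; rewrite /Z !set1_neq2 // andbF.
  rewrite /Z (@neq_set' set0 [set a; x] a) ?(@neq_set' set0 [set y; z] y) // !inE ?eqxx //.
by move/eqP; rewrite oner_eq0.
Qed.

End Graph.

Unset Implicit Arguments.
Local Close Scope ring_scope.

Theorem proposition4p3 (K : fieldType) (d : nat) (G : rel 'I_d)
  (HG : simple_graph G) :
  [/\ [/\ (prime_ideal (I_G2 K G) <-> ideal_eq (I_G2 K G) (I_G K G)),
          (prime_ideal (J_G K G) <-> ideal_eq (J_G K G) (I_G K G))
        & (prime_ideal (L_G K G) <-> ideal_eq (L_G K G) (I_G K G))],
      (ideal_eq (I_G K G) (I_G2 K G) <-> IG_gen_by_quad_binomials K G),
      (ideal_eq (I_G2 K G) (J_G K G) <-> ~ compl_has_triangle G)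
    & (ideal_eq (J_G K G) (L_G K G) <-> complete_multipartite_le3 G)].
Proof.
split; [exact: (partA K HG) | exact: (partB K G) | exact: (partC K HG) | exact: (partD K HG)].
Qed.
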